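(* Let $B$ be a board with specified sink locations. Then $B$ admits a perfect layout if and only if it is possible to assign a color to each non-sink cell of $B$ such that, for every color $i$, the graph $G_i$ is connected.
   Context: A board is an $m\times n$ grid of unit cells in which exactly $c$ cells are sinks, one of each of $c$ colors, and all other cells are empty. A layout places, in some of the empty cells, arrows, each having one of the $c$ colors and one of the four cardinal directions. A packet of color $i$ may enter the grid through any unit edge of the outer boundary of the grid, into the adjacent cell, moving perpendicular to that edge into the grid; it moves one cell at a time in its current direction, and whenever it enters a cell containing an arrow of color $i$ its direction becomes that arrow's direction (arrows of other colors are ignored). The packet succeeds if it enters the sink of color $i$; it fails if it enters a sink of another color, leaves the grid, or travels forever without reaching a sink. A perfect layout is a layout in which every packet of every color entering through every boundary edge succeeds. Given a coloring of all cells of $B$ that agrees with the colors of the sinks, let $C_i$ be the set of cells of color $i$ (including the sink of color $i$) and $\partial B$ the set of unit edges on the boundary of $B$. Two cells of $C_i$, or a cell of $C_i$ and a boundary edge $e\in\partial B$, are visible to each other if they lie in the same row or same column (for a boundary edge: it is an end edge of that row or column) and no sink of a color other than $i$ lies strictly between them. $G_i$ is the graph on vertex set $C_i\cup\partial B$ with an edge between every pair of mutually visible vertices. *)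

(* Defs.v *)
From Stdlib Require Relation_Operators.
From mathcomp Require Import all_boot.

Set Implicit Arguments.
Unset Strict Implicit.
Unset Printing Implicit Defensive.

(* Board: cells are (row, column) : 'I_m * 'I_n.  Row 0 is the top row,
   column 0 the leftmost column.  Colors are 'I_c.  The sink of color j is
   the cell [sink j]. *)

Inductive dir := DUp | DDown | DLeft | DRight.

(* Unit edges of the outer boundary: the left/right end edge of row r,
   the top/bottom end edge of column k. *)
Inductive bedge (m n : nat) :=
  | BLeft of 'I_m | BRight of 'I_m | BTop of 'I_n | BBottom of 'I_n.

Section Board.
Variables (m n c : nat).
Notation cell := ('I_m * 'I_n)%type.
Variable sink : 'I_c -> cell.

Definition move (x : cell) (d : dir) : option cell :=
  match d with
  | DUp => if x.1 == 0 :> nat then None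
           else omap (fun r => (r, x.2)) (insub x.1.-1 : option 'I_m)
  | DDown => omap (fun r => (r, x.2)) (insub x.1.+1 : option 'I_m)
  | DLeft => if x.2 == 0 :> nat then None
             else omap (fun k => (x.1, k)) (insub x.2.-1 : option 'I_n)
  | DRight => omap (fun k => (x.1, k)) (insub x.2.+1 : option 'I_n)
  end.

Definition is_sink (x : cell) : bool := [exists j, sink j == x].

(* A layout: each cell holds at most one arrow (a color and a direction). *)
Definition layout := cell -> option ('I_c * dir).

Definition valid_layout (L : layout) : Prop := forall j, L (sink j) = None.

(* A packet state: the cell just entered and the current direction. *)
Definition step (i : 'I_c) (L : layout) (s : cell * dir) : option (cell * dir) :=
  let: (x, d) := s in
  if is_sink x then None else
  let d' := match L x with
            | Some (j, a) => if j == i then a else d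
            | None => d
            end in
  omap (fun y => (y, d')) (move x d').

Definition entry (e : bedge m n) : option (cell * dir) :=
  match e with
  | BLeft r => omap (fun k => ((r, k), DRight)) (insub 0 : option 'I_n)
  | BRight r => omap (fun k => ((r, k), DLeft)) (insub n.-1 : option 'I_n)
  | BTop k => omap (fun r => ((r, k), DDown)) (insub 0 : option 'I_m)
  | BBottom k => omap (fun r => ((r, k), DUp)) (insub m.-1 : option 'I_m)
  end.

(* a packet of color i entering through e succeeds: it eventually enters the
   sink of color i (before entering any other sink, leaving, or looping). *)
Definition succeeds (i : 'I_c) (L : layout) (e : bedge m n) : Prop :=
  exists (k : nat) (d : dir),
    iter k (fun o => obind (step i L) o) (entry e) = Some (sink i, d).

Definition perfect (L : layout) : Prop :=
  forall (i : 'I_c) (e : bedge m n), succeeds i L e.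

Definition other_sink (i : 'I_c) (s : cell) : bool :=
  [exists j, (j != i) && (sink j == s)].

Definition strictly_between (a b x : nat) : bool :=
  (minn a b < x) && (x < maxn a b).

Definition vis_cells (i : 'I_c) (x y : cell) : bool :=
  ((x.1 == y.1) && [forall s, (other_sink i s && (s.1 == x.1)) ==>
                               ~~ strictly_between x.2 y.2 s.2])
  || ((x.2 == y.2) && [forall s, (other_sink i s && (s.2 == x.2)) ==>
                                  ~~ strictly_between x.1 y.1 s.1]).

Definition vis_edge (i : 'I_c) (x : cell) (e : bedge m n) : bool :=
  match e with
  | BLeft r => (x.1 == r) &&
      [forall s, (other_sink i s && (s.1 == r)) ==> ~~ (s.2 < x.2)]
  | BRight r => (x.1 == r) &&
      [forall s, (other_sink i s && (s.1 == r)) ==> ~~ (x.2 < s.2)]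
  | BTop k => (x.2 == k) &&
      [forall s, (other_sink i s && (s.2 == k)) ==> ~~ (s.1 < x.1)]
  | BBottom k => (x.2 == k) &&
      [forall s, (other_sink i s && (s.2 == k)) ==> ~~ (x.1 < s.1)]
  end.

(* vertices of G_i: cells of color i, and all boundary edges *)
Definition vertex := (cell + bedge m n)%type.

Definition inV (col : cell -> 'I_c) (i : 'I_c) (v : vertex) : Prop :=
  match v with
  | inl x => col x = i
  | inr _ => True
  end.

Definition adjG (col : cell -> 'I_c) (i : 'I_c) (u v : vertex) : Prop :=
  inV col i u /\ inV col i v /\
  match u, v with
  | inl x, inl y => x <> y /\ vis_cells i x y
  | inl x, inr e => vis_edge i x e
  | inr e, inl x => vis_edge i x e
  | inr _, inr _ => False
  end.

Definition connectedG (col : cell -> 'I_c) (i : 'I_c) : Prop :=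
  forall u v, inV col i u -> inV col i v -> Relation_Operators.clos_refl_trans _ (adjG col i) u v.

End Board.

(* Main.v *)
Require Import Defs.
From mathcomp Require Import all_boot zify.
From Stdlib Require Import Relation_Operators Operators_Properties ClassicalEpsilon Classical.

Set Implicit Arguments.
Unset Strict Implicit.
Unset Printing Implicit Defensive.

Section W.
Variables (m n c : nat).
Notation cell := ('I_m * 'I_n)%type.
Variable sink : 'I_c -> cell.

Lemma cell_eq (x y : cell) : x.1 = y.1 :> nat -> x.2 = y.2 :> nat -> x = y.
Proof. by case: x y => [a b] [a' b'] /= /val_inj -> /val_inj ->. Qed.

Lemma moveR (x y : cell) : move x DRight = Some y <-> (y.1 = x.1 :> nat /\ y.2 = (x.2).+1 :> nat).
Proof.
rewrite /=; case: insubP => [k hk hv|hn] /=.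
  split; [by case=> <- /= | by case=> h1 h2; congr Some; apply: cell_eq => //=; rewrite hv].
split=> //; case=> _ h2; move: hn; rewrite -h2 ltn_ord //.
Qed.

Lemma moveD (x y : cell) : move x DDown = Some y <-> (y.2 = x.2 :> nat /\ y.1 = (x.1).+1 :> nat).
Proof.
rewrite /=; case: insubP => [k hk hv|hn] /=.
  split; [by case=> <- /= | by case=> h1 h2; congr Some; apply: cell_eq => //=; rewrite hv].
split=> //; case=> _ h2; move: hn; rewrite -h2 ltn_ord //.
Qed.

Lemma moveL (x y : cell) : move x DLeft = Some y <-> (y.1 = x.1 :> nat /\ (y.2).+1 = x.2 :> nat).
Proof.
rewrite /=; case: eqP => [h0|h0].
  by split=> //; case=> _; rewrite h0.
case: insubP => [k hk hv|hn] /=.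
  split; [case=> <- /=; split=>//; rewrite hv; lia | by case=> h1 h2; congr Some; apply: cell_eq => //=; rewrite hv; lia].
case: (x.2) h0 hn => [[|j] hj] //= _; rewrite ltnW //.
Qed.

Lemma moveU (x y : cell) : move x DUp = Some y <-> (y.2 = x.2 :> nat /\ (y.1).+1 = x.1 :> nat).
Proof.
rewrite /=; case: eqP => [h0|h0].
  by split=> //; case=> _; rewrite h0.
case: insubP => [k hk hv|hn] /=.
  split; [case=> <- /=; split=>//; rewrite hv; lia | by case=> h1 h2; congr Some; apply: cell_eq => //=; rewrite hv; lia].
case: (x.1) h0 hn => [[|j] hj] //= _; rewrite ltnW //.
Qed.


Definition walk (x : cell) (d : dir) (t : nat) : option cell :=
  iter t (fun o => obind (fun z => move z d) o) (Some x).

Lemma walkS x d t : walk x d t.+1 = obind (fun z => move z d) (walk x d t).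
Proof. by []. Qed.

Lemma walk0 x d y : walk x d 0 = Some y <-> x = y.
Proof. by split; [case | move->]. Qed.

Ltac walk_base h1 h2 := rewrite walk0; split; [by move-> ; rewrite ?addn0|case=> h1 h2; apply: cell_eq; lia].

Lemma walkR x t y : walk x DRight t = Some y <-> (y.1 = x.1 :> nat /\ y.2 = x.2 + t :> nat).
Proof.
elim: t y => [|t IH] y; first by walk_base h1 h2.
rewrite walkS; split.
  case E: (walk x DRight t) => [z|] //= /moveR [h1 h2]; case/IH: E => e1 e2; lia.
case=> h1 h2; have hz : x.2 + t < n by have := ltn_ord y.2; lia.
have E : walk x DRight t = Some (y.1, Ordinal hz) by apply/IH; split => /=; lia.
by rewrite E; apply/moveR; split => /=; lia.
Qed.

Lemma walkD x t y : walk x DDown t = Some y <-> (y.2 = x.2 :> nat /\ y.1 = x.1 + t :> nat).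
Proof.
elim: t y => [|t IH] y; first by walk_base h1 h2.
rewrite walkS; split.
  case E: (walk x DDown t) => [z|] //= /moveD [h1 h2]; case/IH: E => e1 e2; lia.
case=> h1 h2; have hz : x.1 + t < m by have := ltn_ord y.1; lia.
have E : walk x DDown t = Some (Ordinal hz, y.2) by apply/IH; split => /=; lia.
by rewrite E; apply/moveD; split => /=; lia.
Qed.

Lemma walkL x t y : walk x DLeft t = Some y <-> (y.1 = x.1 :> nat /\ y.2 + t = x.2 :> nat).
Proof.
elim: t y => [|t IH] y; first by walk_base h1 h2.
rewrite walkS; split.
  case E: (walk x DLeft t) => [z|] //= /moveL [h1 h2]; case/IH: E => e1 e2; lia.
case=> h1 h2; have hz : y.2 + 1 < n by have := ltn_ord x.2; lia.
have E : walk x DLeft t = Some (y.1, Ordinal hz) by apply/IH; split => /=; lia.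
by rewrite E; apply/moveL; split => /=; lia.
Qed.

Lemma walkU x t y : walk x DUp t = Some y <-> (y.2 = x.2 :> nat /\ y.1 + t = x.1 :> nat).
Proof.
elim: t y => [|t IH] y; first by walk_base h1 h2.
rewrite walkS; split.
  case E: (walk x DUp t) => [z|] //= /moveU [h1 h2]; case/IH: E => e1 e2; lia.
case=> h1 h2; have hz : y.1 + 1 < m by have := ltn_ord x.1; lia.
have E : walk x DUp t = Some (Ordinal hz, y.2) by apply/IH; split => /=; lia.
by rewrite E; apply/moveU; split => /=; lia.
Qed.


Definition F (i : 'I_c) (L : layout m n c) := fun o => obind (step sink i L) o.

Definition dnext (i : 'I_c) (L : layout m n c) (x : cell) d :=
  match L x with Some (j, a) => if j == i then a else d | None => d end.

Lemma step_eq i L x d : step sink i L (x, d) =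
  if is_sink sink x then None else omap (fun y => (y, dnext i L x d)) (move x (dnext i L x d)).
Proof. by []. Qed.

Lemma other_is_sink i s : other_sink sink i s -> is_sink sink s.
Proof. by case/existsP=> j /andP[_ h]; apply/existsP; exists j. Qed.

Lemma vis_cells_sym i x y : vis_cells sink i x y -> vis_cells sink i y x.
Proof.
rewrite /vis_cells /strictly_between => /orP[/andP[/eqP h /forallP H]|/andP[/eqP h /forallP H]];
  apply/orP; [left|right]; rewrite h eqxx /=; apply/forallP => s; have := H s;
  rewrite h minnC maxnC //.
Qed.

Notation crt := Relation_Operators.clos_refl_trans.

Lemma adjG_sym col i u v : adjG sink col i u v -> adjG sink col i v u.
Proof.
case: u v => [x|e] [y|f] //= [h1 [h2 h3]]; do 2 (split=> //).
by case: h3 => ne /vis_cells_sym; split=> // ?; apply: ne.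
Qed.

Lemma crt_sym col i u v : crt _ (adjG sink col i) u v -> crt _ (adjG sink col i) v u.
Proof.
elim=> [a b /adjG_sym h|a|a b d _ h1 _ h2]; [exact: rt_step|exact: rt_refl|exact: rt_trans h2 h1].
Qed.


Lemma walkR1 (x : cell) t (y : cell) : walk x DRight t = Some y -> (y.1 = x.1 :> nat /\ y.2 = x.2 + t :> nat).
Proof. by move/walkR. Qed.
Lemma walkR2 (x : cell) t (y : cell) : y.1 = x.1 :> nat -> y.2 = x.2 + t :> nat -> walk x DRight t = Some y.
Proof. by move=> *; apply/walkR. Qed.
Lemma walkL1 (x : cell) t (y : cell) : walk x DLeft t = Some y -> (y.1 = x.1 :> nat /\ y.2 + t = x.2 :> nat).
Proof. by move/walkL. Qed.
Lemma walkL2 (x : cell) t (y : cell) : y.1 = x.1 :> nat -> y.2 + t = x.2 :> nat -> walk x DLeft t = Some y.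
Proof. by move=> *; apply/walkL. Qed.
Lemma walkD1 (x : cell) t (y : cell) : walk x DDown t = Some y -> (y.2 = x.2 :> nat /\ y.1 = x.1 + t :> nat).
Proof. by move/walkD. Qed.
Lemma walkD2 (x : cell) t (y : cell) : y.2 = x.2 :> nat -> y.1 = x.1 + t :> nat -> walk x DDown t = Some y.
Proof. by move=> *; apply/walkD. Qed.
Lemma walkU1 (x : cell) t (y : cell) : walk x DUp t = Some y -> (y.2 = x.2 :> nat /\ y.1 + t = x.1 :> nat).
Proof. by move/walkU. Qed.
Lemma walkU2 (x : cell) t (y : cell) : y.2 = x.2 :> nat -> y.1 + t = x.1 :> nat -> walk x DUp t = Some y.
Proof. by move=> *; apply/walkU. Qed.

Arguments walkR2 : clear implicits.
Arguments walkL2 : clear implicits.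
Arguments walkU2 : clear implicits.
Arguments walkD2 : clear implicits.

Lemma ord_eq k (a b : 'I_k) : a = b :> nat -> a == b.
Proof. by move=> h; apply/eqP/val_inj. Qed.

Ltac vis_tac wl wx :=
  move=> /wl [h1 h2] H; split; [by move=> E; subst; lia|];
  apply/orP; (left + right); apply/andP; split; first (by apply: ord_eq; lia);
  apply/forallP => -[s1 s2]; apply/implyP => /andP[hs /eqP/(congr1 (@nat_of_ord _)) hs1]; rewrite /strictly_between /=;
  apply/negP => /andP[b1 b2];
  ((have /H : 0 < (s2 - a.2) < t by lia) ||
  (have /H : 0 < (a.2 - s2) < t by lia) ||
  (have /H : 0 < (s1 - a.1) < t by lia) ||
  (have /H : 0 < (a.1 - s1) < t by lia));
  move=> /(_ (s1, s2)); match goal with |- (walk ?a _ ?k = Some ?s -> _) -> _ => rewrite (wx a k s) end; try (simpl in *; lia);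
  move=> /(_ erefl) /negP; apply; apply: other_is_sink; eassumption.

Lemma line_vis_cell i a d t x : 0 < t -> walk a d t = Some x ->
  (forall s w, 0 < s < t -> walk a d s = Some w -> ~~ is_sink sink w) ->
  a <> x /\ vis_cells sink i a x.
Proof.
move=> ht; case: d.
- vis_tac walkU1 walkU2.
- vis_tac walkD1 walkD2.
- vis_tac walkL1 walkL2.
- vis_tac walkR1 walkR2.
Qed.


Lemma entry_char (e : bedge m n) (x0 : cell) d0 : entry e = Some (x0, d0) ->
  match e with
  | BLeft r => [/\ x0.1 = r, x0.2 = 0 :> nat & d0 = DRight]
  | BRight r => [/\ x0.1 = r, x0.2 = n.-1 :> nat & d0 = DLeft]
  | BTop k => [/\ x0.2 = k, x0.1 = 0 :> nat & d0 = DDown]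
  | BBottom k => [/\ x0.2 = k, x0.1 = m.-1 :> nat & d0 = DUp]
  end.
Proof.
case: e => r /=; case: insubP => // k _ hk [<- <-] /=; by split.
Qed.

Ltac edge_row wl wx :=
  move=> /wl [h1 h2] H; apply/andP; split; first (by apply: ord_eq; lia);
  apply/forallP => -[s1 s2]; apply/implyP => /andP[hs /eqP/(congr1 (@nat_of_ord _)) hs1];
  apply/negP => /= b1; have := ltn_ord s1; have := ltn_ord s2; move=> o2 o1;
  ((have /H : (s2 - x0.2) < t by (simpl in *; (have : x0.2 <= s2 by lia); lia)) ||
  (have /H : (x0.2 - s2) < t by (simpl in *; (have : s2 <= x0.2 by lia); lia)));
  move=> /(_ (s1, s2)); match goal with |- (walk ?a _ ?k = Some ?s -> _) -> _ => rewrite (wx a k s) end; try (simpl in *; lia);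
  move=> /(_ erefl) /negP; apply; apply: other_is_sink; eassumption.

Ltac edge_col wl wx :=
  move=> /wl [h1 h2] H; apply/andP; split; first (by apply: ord_eq; lia);
  apply/forallP => -[s1 s2]; apply/implyP => /andP[hs /eqP/(congr1 (@nat_of_ord _)) hs1];
  apply/negP => /= b1; have := ltn_ord s1; have := ltn_ord s2; move=> o2 o1;
  ((have /H : (s1 - x0.1) < t by (simpl in *; (have : x0.1 <= s1 by lia); lia)) ||
  (have /H : (x0.1 - s1) < t by (simpl in *; (have : s1 <= x0.1 by lia); lia)));
  move=> /(_ (s1, s2)); match goal with |- (walk ?a _ ?k = Some ?s -> _) -> _ => rewrite (wx a k s) end; try (simpl in *; lia);
  move=> /(_ erefl) /negP; apply; apply: other_is_sink; eassumption.

Lemma line_vis_edge i (e : bedge m n) (x0 : cell) d t (x : cell) : entry e = Some (x0, d) -> walk x0 d t = Some x ->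
  (forall s w, s < t -> walk x0 d s = Some w -> ~~ is_sink sink w) ->
  vis_edge sink i x e.
Proof.
move/entry_char; case: e => r /= [e1 e2 ->]; subst r.
- edge_row walkR1 walkR2.
- edge_row walkL1 walkL2.
- edge_col walkD1 walkD2.
- edge_col walkU1 walkU2.
Qed.


Section Fwd.
Variable L : layout m n c.
Variable col : cell -> 'I_c.
Variable i : 'I_c.
Hypothesis Hcol : forall a d' (e : bedge m n) k dd, ~~ is_sink sink a -> L a = Some (i, d') ->
  iter k (F i L) (entry e) = Some (a, dd) -> col a = i.

Definition line_ok (v : vertex m n) (x : cell) d :=
  match v with
  | inl a => exists t, 0 < t /\ walk a d t = Some x /\
       forall s w, 0 < s < t -> walk a d s = Some w -> ~~ is_sink sink w
  | inr e => exists x0 t, entry e = Some (x0, d) /\ walk x0 d t = Some x /\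
       forall s w, s < t -> walk x0 d s = Some w -> ~~ is_sink sink w
  end.

Lemma anchor_adj v x d : inV col i v -> col x = i -> line_ok v x d -> adjG sink col i v (inl x).
Proof.
case: v => [a|e] hv hx /=.
  case=> t [ht [hw hs]]; do 2 split => //; exact: line_vis_cell ht hw hs.
case=> x0 [t [he [hw hs]]]; do 2 split => //; exact: line_vis_edge he hw hs.
Qed.

Lemma traj_inv (e : bedge m n) k x d : iter k (F i L) (entry e) = Some (x, d) ->
  exists v, inV col i v /\ crt _ (adjG sink col i) (inr e) v /\ line_ok v x d.
Proof.
elim: k x d => [|k IH] x d /=.
  move=> he; exists (inr e); split => //; split; first exact: rt_refl.
  exists x, 0; split => //; split => // s w; rewrite ltn0.
case E: (iter k (F i L) (entry e)) => [[x' d']|]; last by [].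
have [v [hv [hcr hl]]] := IH _ _ E.
move=> H; have {H} : step sink i L (x', d') = Some (x, d) := H.
rewrite step_eq; case: ifP => // hsk.
case M: (move x' (dnext i L x' d')) => [y|] //= [<- <-].
rewrite /dnext in M *; case hL: (L x') M => [[j a]|] M; last first.
  exists v; split => //; split => //.
  case: v hv hcr hl => [a|e'] hv hcr /=.
    case=> t [ht [hw hs]]; exists t.+1; split => //; split; first by rewrite walkS hw.
    move=> s w /andP[s0 st]; rewrite ltnS leq_eqVlt in st; case/orP: st => [/eqP ->|st].
      by rewrite hw => -[<-]; rewrite hsk.
    by apply: hs; rewrite s0.
  case=> x0 [t [he [hw hs]]]; exists x0, t.+1; split => //; split; first by rewrite walkS hw.
  move=> s w st; rewrite ltnS leq_eqVlt in st; case/orP: st => [/eqP ->|st].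
    by rewrite hw => -[<-]; rewrite hsk.
  exact: hs.
move: M; case: eqP => [ej|nj] M.
  subst j.
  have cx : col x' = i by apply: (Hcol (d' := a) (e := e) (k := k) (dd := d')) => //; rewrite hsk.
  exists (inl x'); split => //; split.
    apply: rt_trans hcr _; apply: rt_step; exact: anchor_adj hl.
  exists 1; split => //; split => // s w; lia.
exists v; split => //; split => //.
case: v hv hcr hl => [a'|e'] hv hcr /=.
  case=> t [ht [hw hs]]; exists t.+1; split => //; split; first by rewrite walkS hw.
  move=> s w /andP[s0 st]; rewrite ltnS leq_eqVlt in st; case/orP: st => [/eqP ->|st].
    by rewrite hw => -[<-]; rewrite hsk.
  by apply: hs; rewrite s0.
case=> x0 [t [he [hw hs]]]; exists x0, t.+1; split => //; split; first by rewrite walkS hw.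
move=> s w st; rewrite ltnS leq_eqVlt in st; case/orP: st => [/eqP ->|st].
  by rewrite hw => -[<-]; rewrite hsk.
exact: hs.
Qed.

End Fwd.


Inductive pathn (A : Type) (R : A -> A -> Prop) : nat -> A -> A -> Prop :=
  | pn0 x : pathn R 0 x x
  | pnS k x y z : R x y -> pathn R k y z -> pathn R k.+1 x z.

Lemma crt_pathn (A : Type) (R : A -> A -> Prop) x y : crt _ R x y -> exists k, pathn R k x y.
Proof.
move=> H; elim: (clos_rt_rt1n _ _ _ _ H) => [a|a b d h _ [k hk]]; first by exists 0; constructor.
by exists k.+1; econstructor; eauto.
Qed.

Lemma least_nat (P : nat -> Prop) : (exists k, P k) -> exists k, P k /\ forall k', P k' -> k <= k'.
Proof.
case=> k; elim: k {-2}k (leqnn k) => [|N IH] k hk Pk.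
  exists k; split => // k' _; move: hk; rewrite leqn0 => /eqP ->.
  done.
case: (classic (exists k', k' < k /\ P k')) => [[k' [hk' Pk']]|H].
  apply: (IH k') => //; lia.
exists k; split => // k' Pk'; case: (leqP k k') => // hlt; exfalso; apply: H; by exists k'.
Qed.

Section Bwd.
Variable col : cell -> 'I_c.
Hypothesis Hsink : forall j, col (sink j) = j.

Definition Hwalk i x d t y := 0 < t /\ walk x d t = Some y /\ col y = i /\
  forall s w, 0 < s < t -> walk x d s = Some w -> ~~ is_sink sink w /\ col w != i.

Definition Hadj i x y := col x = i /\ exists d t, Hwalk i x d t y.

Definition Nd i z := epsilon (inhabits 0) (fun k => pathn (Hadj i) k z (sink i) /\
   forall k', pathn (Hadj i) k' z (sink i) -> k <= k').

Definition arrow i z := epsilon (inhabits DUp) (fun d => exists t y, Hwalk i z d t y /\ Nd i y < Nd i z).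

Definition layout_of : layout m n c :=
  fun x => if is_sink sink x then None else Some (col x, arrow (col x) x).

Lemma sink_other i w : is_sink sink w -> col w != i -> other_sink sink i w.
Proof.
case/existsP=> j /eqP <-; rewrite Hsink => hj; apply/existsP; exists j; by rewrite hj eqxx.
Qed.

Lemma sink_col i z : is_sink sink z -> col z = i -> z = sink i.
Proof. by case/existsP=> j /eqP <-; rewrite Hsink => ->. Qed.

Lemma row_red i g (x y : cell) : col x = i -> col y = i -> y.1 = x.1 :> nat -> x.2 < y.2 -> y.2 - x.2 <= g ->
  (forall s : cell, other_sink sink i s -> s.1 = x.1 :> nat -> ~ (x.2 < s.2 < y.2)) ->
  crt _ (Hadj i) x y /\ crt _ (Hadj i) y x.
Proof.
elim: g x y => [|g IH] x y cx cy e1 lt hg H; first lia.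
case: (classic (exists z : cell, z.1 = x.1 :> nat /\ x.2 < z.2 < y.2 /\ col z = i)) => [[z [z1 [zb cz]]]|NZ].
  have [a1 a2] : crt _ (Hadj i) x z /\ crt _ (Hadj i) z x.
    apply: IH => //; try lia; move=> s hs s1 hb; apply: (H s hs s1); lia.
  have [b1 b2] : crt _ (Hadj i) z y /\ crt _ (Hadj i) y z.
    apply: IH => //; try lia; move=> s hs s1 hb; apply: (H s hs _); lia.
  by split; apply: rt_trans; eauto.
have mid : forall w : cell, w.1 = x.1 :> nat -> x.2 < w.2 < y.2 -> ~~ is_sink sink w /\ col w != i.
  move=> w w1 wb.
  have cw : col w != i by apply/eqP => cw; apply: NZ; exists w.
  split => //; apply/negP => sw; exact: (H w (sink_other sw cw) w1 wb).
split; apply: rt_step.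
  split => //; exists DRight, (y.2 - x.2); split; first lia.
  split; first by apply: walkR2; lia.
  split => // s w /andP[s0 st] /walkR1 [w1 w2]; apply: mid; lia.
split => //; exists DLeft, (y.2 - x.2); split; first lia.
split; first by apply: walkL2; lia.
split => // s w /andP[s0 st] /walkL1 [w1 w2]; apply: mid; lia.
Qed.

Lemma col_red i g (x y : cell) : col x = i -> col y = i -> y.2 = x.2 :> nat -> x.1 < y.1 -> y.1 - x.1 <= g ->
  (forall s : cell, other_sink sink i s -> s.2 = x.2 :> nat -> ~ (x.1 < s.1 < y.1)) ->
  crt _ (Hadj i) x y /\ crt _ (Hadj i) y x.
Proof.
elim: g x y => [|g IH] x y cx cy e1 lt hg H; first lia.
case: (classic (exists z : cell, z.2 = x.2 :> nat /\ x.1 < z.1 < y.1 /\ col z = i)) => [[z [z1 [zb cz]]]|NZ].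
  have [a1 a2] : crt _ (Hadj i) x z /\ crt _ (Hadj i) z x.
    apply: IH => //; try lia; move=> s hs s1 hb; apply: (H s hs s1); lia.
  have [b1 b2] : crt _ (Hadj i) z y /\ crt _ (Hadj i) y z.
    apply: IH => //; try lia; move=> s hs s1 hb; apply: (H s hs _); lia.
  by split; apply: rt_trans; eauto.
have mid : forall w : cell, w.2 = x.2 :> nat -> x.1 < w.1 < y.1 -> ~~ is_sink sink w /\ col w != i.
  move=> w w1 wb.
  have cw : col w != i by apply/eqP => cw; apply: NZ; exists w.
  split => //; apply/negP => sw; exact: (H w (sink_other sw cw) w1 wb).
split; apply: rt_step.
  split => //; exists DDown, (y.1 - x.1); split; first lia.
  split; first by apply: walkD2; lia.
  split => // s w /andP[s0 st] /walkD1 [w1 w2]; apply: mid; lia.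
split => //; exists DUp, (y.1 - x.1); split; first lia.
split; first by apply: walkU2; lia.
split => // s w /andP[s0 st] /walkU1 [w1 w2]; apply: mid; lia.
Qed.

Lemma vis_red i (x y : cell) : col x = i -> col y = i -> x <> y -> vis_cells sink i x y ->
  crt _ (Hadj i) x y.
Proof.
move=> cx cy ne /orP[] /andP[/eqP e /forallP H].
  have e' : x.1 = y.1 :> nat by rewrite e.
  case: (ltngtP x.2 y.2) => h.
  - apply: (proj1 (row_red (g := y.2 - x.2) cx cy _ h _ _)) => //; try lia.
    move=> s hs s1 hb; have := H s; rewrite hs /= (@ord_eq _ s.1 x.1) //= /strictly_between.
    move=> /negP; apply; apply/andP; lia.
  - apply: (proj2 (row_red (g := x.2 - y.2) cy cx _ h _ _)) => //; try lia.
    move=> s hs s1 hb; have := H s; rewrite hs /= (@ord_eq _ s.1 x.1) /=; last lia.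
    rewrite /strictly_between => /negP; apply; apply/andP; lia.
  - by case: ne; apply: cell_eq.
have e' : x.2 = y.2 :> nat by rewrite e.
case: (ltngtP x.1 y.1) => h.
- apply: (proj1 (col_red (g := y.1 - x.1) cx cy _ h _ _)) => //; try lia.
  move=> s hs s1 hb; have := H s; rewrite hs /= (@ord_eq _ s.2 x.2) //= /strictly_between.
  move=> /negP; apply; apply/andP; lia.
- apply: (proj2 (col_red (g := x.1 - y.1) cy cx _ h _ _)) => //; try lia.
  move=> s hs s1 hb; have := H s; rewrite hs /= (@ord_eq _ s.2 x.2) /=; last lia.
  rewrite /strictly_between => /negP; apply; apply/andP; lia.
- by case: ne; apply: cell_eq.
Qed.

Lemma edge_pair i (e : bedge m n) (x y : cell) : vis_edge sink i x e -> vis_edge sink i y e ->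
  vis_cells sink i x y.
Proof.
case: e => r /= /andP[/eqP ex /forallP Hx] /andP[/eqP ey /forallP Hy];
  apply/orP; [left|left|right|right]; (apply/andP; split; first by rewrite ex ey);
  apply/forallP => s; apply/implyP => /andP[hs /eqP s1];
  move: (Hx s) (Hy s); rewrite hs s1 ex eqxx /= /strictly_between => h1 h2;
  apply/negP => /andP[b1 b2]; move: h1 h2; rewrite -!ltnNge => h1 h2; lia.
Qed.

Definition touch i (x : cell) (u : vertex m n) :=
  u = inl x \/ exists e, u = inr e /\ vis_edge sink i x e.

Lemma G_to_H i u s : clos_refl_trans_1n _ (adjG sink col i) u (inl s) ->
  forall x, col x = i -> touch i x u -> crt _ (Hadj i) x s.
Proof.
move=> H; remember (inl s : vertex m n) as v eqn:ev; revert ev.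
elim: H => [u0|u' w v' hadj _ IH] ev x cx.
  case=> [E|[e [E _]]]; rewrite E in ev; last by [].
  by case: ev => ->; apply: rt_refl.
case=> [E|[e [E he]]]; subst u'.
  case: w hadj IH => [y|e] /= [_ [cy hv]] IH.
    case: hv => ne vv; apply: rt_trans (IH ev y cy (or_introl erefl)).
    exact: vis_red.
  apply: IH => //; right; by exists e.
case: w hadj IH => [y|f] /= [_ [cy hv]] IH //.
case: (classic (x = y)) => [E|ne]; first by subst y; apply: IH => //; left.
apply: rt_trans (IH ev y cy (or_introl erefl)).
apply: vis_red => //; exact: edge_pair he hv.
Qed.

Lemma travel i (L : layout m n c) x d0 d t y : ~~ is_sink sink x -> dnext i L x d0 = d -> 0 < t ->
  walk x d t = Some y ->
  (forall s w, 0 < s < t -> walk x d s = Some w -> ~~ is_sink sink w /\ dnext i L w d = d) ->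
  iter t (F i L) (Some (x, d0)) = Some (y, d).
Proof.
move=> hx hd; elim: t y => // t IH y _; rewrite walkS.
case: t IH => [|t] IH.
  move=> hm _; change (step sink i L (x, d0) = Some (y, d)); rewrite step_eq (negbTE hx) hd.
  by move: hm; rewrite /= => ->.
case E: (walk x d t.+1) => [z|] //; move=> /= hm H.
have [hz hdz] := H t.+1 z (ltnSn _) E.
change (F i L (iter t.+1 (F i L) (Some (x, d0))) = Some (y, d)); rewrite (IH z) //; last by move=> s w /andP[s0 st] hw; apply: H hw; rewrite s0 /=; lia.
by change (step sink i L (z, d) = Some (y, d)); rewrite step_eq (negbTE hz) hdz hm.
Qed.

Lemma pathn_inv (A : Type) (R : A -> A -> Prop) k x y : pathn R k x y -> x <> y ->
  exists k' w, k = k'.+1 /\ R x w /\ pathn R k' w y.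
Proof. by case=> [a|k' a b d h p] //; exists k', b. Qed.

Lemma entry_some (e : bedge m n) (y : cell) : exists x0 d0, entry e = Some (x0, d0).
Proof.
have hm := ltn_ord y.1; have hn := ltn_ord y.2.
case: e => r /=; case: insubP => [k _ _|]; try (by eexists; eexists); rewrite /=; lia.
Qed.

Lemma edge_walk i (e : bedge m n) (y x0 : cell) d0 : vis_edge sink i y e -> entry e = Some (x0, d0) ->
  exists t, walk x0 d0 t = Some y /\ forall s w, s < t -> walk x0 d0 s = Some w -> ~~ other_sink sink i w.
Proof.
move=> hv /entry_char; case: e hv => r /= /andP[/eqP ey /forallP H] [e1 e2 ->]; subst r;
  move/(congr1 (@nat_of_ord _)): e1 => e1.
- exists y.2; split; first by apply: walkR2; lia.
  move=> s w st /walkR1 [w1 w2]; apply/negP => ho; move: (H w); rewrite ho /=.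
  rewrite (@ord_eq _ w.1 y.1) /= -?ltnNge; lia.
- exists (n.-1 - y.2); split; first by (apply: walkL2; have := ltn_ord y.2; lia).
  move=> s w st /walkL1 [w1 w2]; apply/negP => ho; move: (H w); rewrite ho /=.
  rewrite (@ord_eq _ w.1 y.1) /= -?ltnNge; have := ltn_ord y.2; lia.
- exists y.1; split; first by apply: walkD2; lia.
  move=> s w st /walkD1 [w1 w2]; apply/negP => ho; move: (H w); rewrite ho /=.
  rewrite (@ord_eq _ w.2 y.2) /= -?ltnNge; lia.
- exists (m.-1 - y.1); split; first by (apply: walkU2; have := ltn_ord y.1; lia).
  move=> s w st /walkU1 [w1 w2]; apply/negP => ho; move: (H w); rewrite ho /=.
  rewrite (@ord_eq _ w.2 y.2) /= -?ltnNge; have := ltn_ord y.1; lia.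
Qed.

Lemma rt1n_first (A : Type) (R : A -> A -> Prop) (u v : A) :
  clos_refl_trans_1n A R u v -> u <> v -> exists w, R u w.
Proof. by case=> [|w z hw _]; [|exists w]. Qed.

Section Col.
Variable i : 'I_c.
Hypothesis Hconn : connectedG sink col i.

Lemma cell_reach z : col z = i -> crt _ (Hadj i) z (sink i).
Proof.
move=> cz; have H : crt _ (adjG sink col i) (inl z) (inl (sink i)).
  by apply: Hconn; rewrite /= ?Hsink.
exact: G_to_H (clos_rt_rt1n _ _ _ _ H) z cz (or_introl erefl).
Qed.

Lemma Nd_spec z : col z = i -> pathn (Hadj i) (Nd i z) z (sink i) /\
  forall k', pathn (Hadj i) k' z (sink i) -> Nd i z <= k'.
Proof.
move=> cz; rewrite /Nd; apply: (epsilon_spec (inhabits 0) (fun k => pathn (Hadj i) k z (sink i) /\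
   forall k', pathn (Hadj i) k' z (sink i) -> k <= k')).
apply: least_nat; apply: crt_pathn.
exact: cell_reach.
Qed.

Lemma descent z : col z = i -> z <> sink i ->
  exists d t y, Hwalk i z d t y /\ Nd i y < Nd i z.
Proof.
move=> cz nz; have [P _] := Nd_spec cz.
have [k' [w [ek [[_ [d [t hw]]] pw]]]] := pathn_inv P nz.
exists d, t, w; split => //; rewrite ek ltnS.
have cw : col w = i by case: hw => _ [_ [? _]].
exact: (proj2 (Nd_spec cw)) _ pw.
Qed.

Lemma arrow_spec z : col z = i -> z <> sink i ->
  exists t y, Hwalk i z (arrow i z) t y /\ Nd i y < Nd i z.
Proof.
move=> cz nz; rewrite /arrow; apply: (epsilon_spec (inhabits DUp) (fun d => exists t y, Hwalk i z d t y /\ Nd i y < Nd i z)).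
have [d [t [y h]]] := descent cz nz; by exists d, t, y.
Qed.

Lemma dnext_lo z d : ~~ is_sink sink z ->
  dnext i layout_of z d = if col z == i then arrow i z else d.
Proof. by move=> hz; rewrite /dnext /layout_of (negbTE hz); case: eqP => // ->. Qed.

Lemma reach N z d : col z = i -> Nd i z <= N ->
  exists k d', iter k (F i layout_of) (Some (z, d)) = Some (sink i, d').
Proof.
elim: N z d => [|N IH] z d cz hN;
 (case: (classic (z = sink i)) => [->|nz]; first by exists 0, d);
 have [t [y [[ht [hw [cy hs]]] hlt]]] := arrow_spec cz nz; first lia.
have hzs : ~~ is_sink sink z by apply/negP => /sink_col /(_ cz).
have [k [d' hk]] := IH y (arrow i z) cy (ltac:(lia)).
exists (k + t), d'; rewrite iterD (travel (d := arrow i z) (y := y) hzs) //.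
- by rewrite dnext_lo // cz eqxx.
- move=> s w st hw'; have [h1 h2] := hs s w st hw'; split => //.
  by rewrite dnext_lo // (negbTE h2).
Qed.

Lemma edge_success (e : bedge m n) : succeeds sink i layout_of e.
Proof.
have H : crt _ (adjG sink col i) (inr e) (inl (sink i)) by apply: Hconn; rewrite /= ?Hsink.
have H1 := clos_rt_rt1n _ _ _ _ H.
have [w hadj] : exists w, adjG sink col i (inr e) w.
  by apply: (rt1n_first H1).
case: w hadj => [y|f] /= [_ [cy hv]] //.
have [x0 [d0 he]] := entry_some e y.
have [t [hw ho]] := edge_walk hv he.
have [t' [[z [hz cz]] hmin]] := least_nat (P := fun t' => exists z, walk x0 d0 t' = Some z /\ col z = i)
  (ex_intro _ t (ex_intro _ y (conj hw cy))).
have tt : t' <= t by apply: hmin; exists y.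
have mid : forall s w, s < t' -> walk x0 d0 s = Some w -> ~~ is_sink sink w /\ col w != i.
  move=> s w st hws.
  have cw : col w != i by apply/eqP => cw; have := hmin s (ex_intro _ w (conj hws cw)); lia.
  split => //; apply/negP => sw; have := ho s w (leq_trans st tt) hws; by rewrite (sink_other sw cw).
rewrite /succeeds he.
case: t' hz hmin tt mid => [|t'] hz hmin tt mid.
  move/walk0: hz => E; subst z.
  have [k [d' hk]] := reach d0 cz (leqnn _); by exists k, d'.
have [hx0 cx0] := mid 0 x0 (ltn0Sn _) erefl.
have [k [d' hk]] := reach d0 cz (leqnn _).
exists (k + t'.+1), d'; rewrite iterD (travel (d := d0) (y := z) hx0) //.
- by rewrite dnext_lo // (negbTE cx0).
- move=> s w /andP[s0 st] hw'; have [h1 h2] := mid s w st hw'; split => //.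
  by rewrite dnext_lo // (negbTE h2).
Qed.

End Col.

End Bwd.


Lemma no_vis_left i (x : cell) : (forall j, ~~ vis_cells sink j x (sink j)) -> vis_edge sink i x (BLeft n x.1).
Proof.
move=> H; rewrite /=; apply/andP; split => //.
apply/forallP => s; apply/implyP => /andP[ho /eqP s1]; apply/negP => lt.
case/existsP: ho => j0 /andP[_ /eqP sj0].
pose P := fun j => ((sink j).1 == x.1) && ((sink j).2 < x.2).
have P0 : P j0 by rewrite /P sj0 s1 eqxx lt.
case: (@arg_maxnP _ j0 P (fun j => nat_of_ord (sink j).2) P0) => jm Pm Hm.
apply: (negP (H jm)); apply/orP; left; move/andP: Pm => [/eqP e1 lt1].
apply/andP; split; first by rewrite e1.
apply/forallP => s'; apply/implyP => /andP[ho' /eqP s1']; apply/negP; rewrite /strictly_between => /andP[b1 b2].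
case/existsP: ho' => j' /andP[_ /eqP sj'].
have Pj' : P j'.
  subst s'; apply/andP; split; first by rewrite s1'.
  by rewrite (maxn_idPl (ltnW lt1)) in b2.
have := Hm j' Pj'; rewrite /= sj' leqNgt.
subst s'; by rewrite (minn_idPr (ltnW lt1)) in b1; rewrite b1.
Qed.

Section Fwd2.
Variable L : layout m n c.
Hypothesis hc : 0 < c.
Hypothesis inj : injective sink.
Hypothesis Hperf : perfect sink L.

Definition visited j (a : cell) := exists (e : bedge m n) k dd, iter k (F j L) (entry e) = Some (a, dd).

Definition fb (x : cell) : 'I_c :=
  if [pick j | vis_cells sink j x (sink j)] is Some j then j else Ordinal hc.

Definition colF (x : cell) : 'I_c :=
  match [pick j | sink j == x] with
  | Some j => j
  | None => match L x with
            | Some (j, _) => if excluded_middle_informative (visited j x) then j else fb x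
            | None => fb x
            end
  end.

Lemma colF_sink j : colF (sink j) = j.
Proof.
rewrite /colF; case: pickP => [j' /eqP /inj -> //|/(_ j)]; by rewrite eqxx.
Qed.

Lemma pick_none x : ~~ is_sink sink x -> [pick j | sink j == x] = None.
Proof.
move=> hx; case: pickP => // j hj; by move: hx; rewrite /is_sink; case/existsP; exists j.
Qed.

Lemma HcolF i a d' (e : bedge m n) k dd : ~~ is_sink sink a -> L a = Some (i, d') ->
  iter k (F i L) (entry e) = Some (a, dd) -> colF a = i.
Proof.
move=> ha hL hk; rewrite /colF pick_none // hL.
case: (excluded_middle_informative (visited i a)) => // nv; exfalso; apply: nv; by exists e, k, dd.
Qed.

Lemma col_cases x : ~~ is_sink sink x ->
  (exists j dd, L x = Some (j, dd) /\ visited j x /\ colF x = j) \/ colF x = fb x.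
Proof.
move=> hx; rewrite /colF pick_none //.
case: (L x) => [[j dd]|]; last by right.
destruct (excluded_middle_informative (visited j x)) as [v|nv]; last by right.
by left; exists j, dd.
Qed.

Lemma edge_conn i (e : bedge m n) : crt _ (adjG sink colF i) (inr e) (inl (sink i)).
Proof.
have [k [d hk]] := Hperf i e.
have [v [hv [hcr hl]]] := traj_inv (@HcolF i) hk.
exact: rt_trans hcr (rt_step _ _ _ _ (anchor_adj hv (colF_sink i) hl)).
Qed.

Lemma cell_conn i x : colF x = i -> crt _ (adjG sink colF i) (inl x) (inl (sink i)).
Proof.
move=> cx; case: (boolP (is_sink sink x)) => sx.
  case/existsP: sx => j /eqP ex; subst x; rewrite colF_sink in cx; subst j; exact: rt_refl.
case: (col_cases sx) => [[j [dd [hL [[e [k [d0 hk]]] cj]]]]|cf].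
  rewrite cx in cj; subst j.
  have [v [hv [hcr hl]]] := traj_inv (@HcolF i) hk.
  have := anchor_adj hv cx hl => /adjG_sym ha.
  apply: rt_trans (rt_step _ _ _ _ ha) _.
  apply: rt_trans (crt_sym hcr) (edge_conn i e).
have nxs : x <> sink i by move=> E; move: sx; rewrite E; case/negP; apply/existsP; exists i.
move: cf; rewrite /fb; case: pickP => [j hj|H] cf.
  rewrite cx in cf; subst j; apply: rt_step; split => //; split; first exact: colF_sink.
  by split.
apply: rt_trans (edge_conn i (BLeft n x.1)); apply: rt_step; split => //; split => //.
apply: no_vis_left => j; by rewrite H.
Qed.

Lemma fwd_conn i : connectedG sink colF i.
Proof.
have key : forall u, inV colF i u -> crt _ (adjG sink colF i) u (inl (sink i)).
  case=> [x|e] /= h; [exact: cell_conn | exact: edge_conn].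
move=> u v hu hv; apply: rt_trans (key u hu) (crt_sym (key v hv)).
Qed.

End Fwd2.

End W.

Unset Implicit Arguments.

Theorem mainTheorem8 (m n c : nat) (sink : 'I_c -> 'I_m * 'I_n) :
  0 < c -> injective sink ->
  (exists L : layout m n c, valid_layout sink L /\ perfect sink L) <->
  (exists col : 'I_m * 'I_n -> 'I_c,
     (forall j, col (sink j) = j) /\ forall i : 'I_c, connectedG sink col i).
Proof.
move=> hc inj; split.
  case=> L [hv hp]; exists (colF sink L hc); split; first exact: colF_sink.
  exact: fwd_conn.
case=> col [hs hconn]; exists (layout_of sink col); split.
  move=> j; rewrite /layout_of; have -> : is_sink sink (sink j) by apply/existsP; exists j.
  by [].
move=> i e; exact: edge_success.
Qed.
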